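(* Let $\mathfrak{g}$ be a real Lie algebra with a complex structure $J$ and a $J$-compatible inner product $g$, and let $c\in\Lambda^3\mathfrak{g}^*$ be defined by $$c(X,Y,Z)=-g([JX,JY],Z)-g([JY,JZ],X)-g([JZ,JX],Y).$$ Let $\xi$ be the center of $\mathfrak{g}$ and $X\in\xi$. Then for every $Y\in\mathfrak{g}$, $$dc(X,Y,JX,JY)=2\Big(\|[Y,JX]\|^2-g([[JX,Y],JX],Y)-g([[Y,JY],JX],X)\Big).$$
   Context: A complex structure on $\mathfrak{g}$ is $J$ with $J^2=-\mathrm{Id}$ and $[X,Y]-[JX,JY]+J[JX,Y]+J[X,JY]=0$. $g$ is $J$-compatible if $g(JX,JY)=g(X,Y)$. The form $c$ is the torsion $3$-form of the Bismut connection of $(J,g)$. The differential $d$ is the Chevalley–Eilenberg differential: for $\alpha\in\Lambda^k\mathfrak{g}^*$, $d\alpha(X_0,\dots,X_k)=\sum_{i<j}(-1)^{i+j}\alpha([X_i,X_j],X_0,\dots,\hat X_i,\dots,\hat X_j,\dots,X_k)$. $\|\cdot\|$ is the norm induced by $g$. *)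

(* Defs.v *)
From mathcomp Require Import all_boot all_order all_algebra.
From mathcomp Require Import reals.
Set Implicit Arguments. Unset Strict Implicit. Unset Printing Implicit Defensive.
Import Order.TTheory GRing.Theory Num.Theory.
Local Open Scope ring_scope.

(* A (finite-dimensional) real Lie algebra is modelled as a vectType V over a
   realType R together with a bracket br : V -> V -> V. *)

Section Defs.
Variables (R : realType) (V : vectType R).

Definition is_lie_bracket (br : V -> V -> V) : Prop :=
  [/\ (forall (a : R) x y z, br (a *: x + y) z = a *: br x z + br y z),
      (forall (a : R) x y z, br x (a *: y + z) = a *: br x y + br x z),
      (forall x, br x x = 0) &
      (forall x y z, br x (br y z) + br y (br z x) + br z (br x y) = 0)].

Definition is_complex_structure (br : V -> V -> V) (J : V -> V) : Prop :=
  [/\ (forall (a : R) x y, J (a *: x + y) = a *: J x + J y),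
      (forall x, J (J x) = - x) &
      (forall x y, br x y - br (J x) (J y) + J (br (J x) y) + J (br x (J y)) = 0)].

Definition is_compatible_inner_product (J : V -> V) (g : V -> V -> R) : Prop :=
  [/\ (forall (a : R) x y z, g (a *: x + y) z = a * g x z + g y z),
      (forall x y, g x y = g y x),
      (forall x, x != 0 -> 0 < g x x) &
      (forall x y, g (J x) (J y) = g x y)].

Definition sqnorm (g : V -> V -> R) (x : V) : R := g x x.

Definition cform (br : V -> V -> V) (J : V -> V) (g : V -> V -> R)
  (x y z : V) : R :=
  - g (br (J x) (J y)) z - g (br (J y) (J z)) x - g (br (J z) (J x)) y.

(* Chevalley--Eilenberg differential of a 3-form alpha, evaluated on 4 vectors:
   d alpha(X0,X1,X2,X3) = sum_{i<j} (-1)^(i+j) alpha([Xi,Xj], X_k, X_l) (k<l the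
   remaining indices in increasing order). *)
Definition ce_d3 (br : V -> V -> V) (alpha : V -> V -> V -> R)
  (x0 x1 x2 x3 : V) : R :=
    - alpha (br x0 x1) x2 x3
    + alpha (br x0 x2) x1 x3
    - alpha (br x0 x3) x1 x2
    - alpha (br x1 x2) x0 x3
    + alpha (br x1 x3) x0 x2
    - alpha (br x2 x3) x0 x1.

Definition in_center (br : V -> V -> V) (x : V) : Prop :=
  forall y, br x y = 0.

End Defs.

(* Main.v *)
Require Import Defs.
From mathcomp Require Import all_boot all_order all_algebra.
From mathcomp Require Import reals.
From mathcomp Require Import ring lra.
Import Order.TTheory GRing.Theory Num.Theory.
Local Open Scope ring_scope.

Theorem lemma3p4 (R : realType) (V : vectType R)
  (br : V -> V -> V) (J : V -> V) (g : V -> V -> R)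
  (Hbr : is_lie_bracket br)
  (HJ : is_complex_structure br J)
  (Hg : is_compatible_inner_product J g)
  (x : V) (Hx : in_center br x) (y : V) :
  ce_d3 br (cform br J g) x y (J x) (J y) =
  2 * (sqnorm g (br y (J x)) - g (br (br (J x) y) (J x)) y
       - g (br (br y (J y)) (J x)) x).
Proof.
case: Hbr => brl brr brxx jac.
case: HJ => Jl JJ Jint.
case: Hg => gl gsym gpos gJ.
have Jadd u v : J (u + v) = J u + J v by have := Jl 1 u v; rewrite !scale1r.
have J0 : J 0 = 0 by apply: (@addrI _ (J 0)); rewrite addr0 -Jadd addr0.
have JN u : J (- u) = - J u by have := Jl (-1) u 0; rewrite addr0 J0 addr0 !scaleN1r.
have bradd1 u v w : br (u + v) w = br u w + br v w by have := brl 1 u v w; rewrite !scale1r.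
have bradd2 u v w : br w (u + v) = br w u + br w v by have := brr 1 w u v; rewrite !scale1r.
have br0l w : br 0 w = 0 by apply: (@addrI _ (br 0 w)); rewrite addr0 -bradd1 addr0.
have br0r w : br w 0 = 0 by apply: (@addrI _ (br w 0)); rewrite addr0 -bradd2 addr0.
have brN1 u w : br (- u) w = - br u w by have := brl (-1) u 0 w; rewrite addr0 br0l addr0 !scaleN1r.
have brN2 u w : br w (- u) = - br w u by have := brr (-1) w u 0; rewrite addr0 br0r addr0 !scaleN1r.
have brC u v : br u v = - br v u.
  have := brxx (u + v); rewrite bradd1 !bradd2 !brxx add0r addr0 => /eqP.
  by rewrite addr_eq0 => /eqP.
have gadd1 u v w : g (u + v) w = g u w + g v w by have := gl 1 u v w; rewrite scale1r mul1r.
have g0l w : g 0 w = 0 by apply: (@addrI _ (g 0 w)); rewrite addr0 -gadd1 addr0.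
have g0r w : g w 0 = 0 by rewrite gsym g0l.
have gN1 u w : g (- u) w = - g u w by have := gl (-1) u 0 w; rewrite addr0 g0l addr0 scaleN1r mulN1r.
have gN2 u w : g w (- u) = - g w u by rewrite gsym gN1 gsym.
have DJ z : J (br (J x) z) = br (J x) (J z).
  have := Jint x z; rewrite !Hx J0 addr0 sub0r => /eqP; rewrite addrC subr_eq0.
  by move/eqP.
rewrite /ce_d3 /cform /sqnorm !Hx !J0 !br0l !br0r !g0l !g0r.
have Hx' z : br z x = 0 by rewrite brC Hx oppr0.
have hA : br y (J x) = - br (J x) y by rewrite brC.
rewrite !oppr0 ?subr0 ?addr0 hA !JJ !JN !DJ !JJ !brN1 !brN2 ?Hx' ?Hx ?oppr0 ?g0l ?g0r ?gN1 ?gN2.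
rewrite ?brN1 ?gN1.
have ha : g (br (br (J x) (J y)) (J x)) (J y) = g (br (br (J x) y) (J x)) y.
  by rewrite (brC (br (J x) (J y))) (brC (br (J x) y)) -!DJ !gN1 gJ.
have hf : g (br (J x) (J y)) (br (J x) (J y)) = g (br (J x) y) (br (J x) y).
  by rewrite -DJ gJ.
have hd : g (br (J (br y (J y))) (J x)) (J x) = g (br (br y (J y)) (J x)) x.
  by rewrite (brC (J _)) (brC (br y _)) -DJ !gN1 gJ.
have hj0 : br (J x) (br y (J y)) = br y (br (J x) (J y)) - br (J y) (br (J x) y).
  have := jac (J x) y (J y); rewrite (brC (J y) (J x)) brN2 => H.
  apply/eqP; rewrite -subr_eq0 -H.
  by rewrite opprB addrA addrAC.
have hj : g (br (br y (J y)) (J x)) x = g (br (J y) (br (J x) y)) x - g (br y (br (J x) (J y))) x.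
  rewrite (brC (br y (J y)) (J x)) hj0 gN1 gadd1 gN1; ring.
rewrite ha hf hd hj; ring.
Qed.
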